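(* Let $q$ be a self-join-free Boolean conjunctive query that has the key-join property. Then for all atoms $F,G\in q$, if $F$ attacks $G$ in the attack graph of $q$, there exists a sequence of atoms $F_0,F_1,\dots,F_\ell$ of $q$ such that $F_0=F$, $F_\ell=G$, and $\mathrm{key}(F_i)\subseteq\mathrm{vars}(F_{i-1})$ for all $i\in\{1,\dots,\ell\}$.
   Context: Every relation name has a signature $[n,k]$ ($1\le k\le n$; primary-key positions $1,\dots,k$) and a mode in $\{\mathsf{c},\mathsf{i}\}$. For an atom $F$, $\mathrm{key}(F)$ is the set of variables at primary-key positions and $\mathrm{vars}(F)$ the set of all its variables. A self-join-free Boolean conjunctive query is a finite set of atoms with pairwise distinct relation names. $q$ has the key-join property if for all $F,G\in q$, either $\mathrm{vars}(F)\cap\mathrm{vars}(G)\in\{\emptyset,\mathrm{key}(F),\mathrm{key}(G)\}$ or $\mathrm{vars}(F)\cap\mathrm{vars}(G)\supseteq\mathrm{key}(F)\cup\mathrm{key}(G)$. Attack graph: $\mathcal{K}(p)=\{\mathrm{key}(F)\to\mathrm{vars}(F)\mid F\in p\}$ (functional dependencies over variables); $q^{\mathsf{c}}$ = atoms of $q$ of mode $\mathsf{c}$; $F^{+,q}$ = set of variables $x$ of $q$ with $\mathcal{K}(q\setminus\{F\})\cup\mathcal{K}(q^{\mathsf{c}})\models\mathrm{key}(F)\to x$. $F$ attacks $G$ ($F\ne G$) iff there are atoms $F_0=F,\dots,F_m=G$ of $q$ and variables $x_i\in(\mathrm{vars}(F_{i-1})\cap\mathrm{vars}(F_i))\setminus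 F^{+,q}$ for $1\le i\le m$. *)

(* Defs.v *)
From mathcomp Require Import all_boot.
Set Implicit Arguments. Unset Strict Implicit. Unset Printing Implicit Defensive.

(* Conventions.
   - V : variables, C : constants, Rel : relation names (all eqTypes).
   - A term is either a variable (inl v) or a constant (inr c).
   - An atom is a pair (R, args) of a relation name and its argument list.
   - sig R = (n, k) is the signature [n,k] of R; primary-key positions are
     the first k positions.
   - mode R = true means mode c ("consistent"), false means mode i. *)

Definition term (V C : eqType) := (V + C)%type.
Definition atom (Rel V C : eqType) := (Rel * seq (term V C))%type.

Section CQ.
Variables (Rel V C : eqType).
Variable sig : Rel -> nat * nat.
Variable mode : Rel -> bool.

Local Notation atom := (atom Rel V C).

Definition rel_of (F : atom) : Rel := F.1.

Definition term_vars (s : seq (term V C)) : seq V :=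
  pmap (fun t => match t with inl v => Some v | inr _ => None end) s.

Definition key (F : atom) : seq V := term_vars (take (sig F.1).2 F.2).
Definition vars (F : atom) : seq V := term_vars F.2.

Definition wf_atom (F : atom) : Prop :=
  size F.2 = (sig F.1).1 /\ 1 <= (sig F.1).2 <= (sig F.1).1.

(* A self-join-free Boolean conjunctive query: a finite set of atoms with
   pairwise distinct relation names (uniqueness of names also makes the
   atom list duplicate-free). *)
Definition sjf_query (q : seq atom) : Prop :=
  (forall F, F \in q -> wf_atom F) /\ uniq (map rel_of q).

Definition inter_eq (A B X : seq V) : Prop :=
  forall x, (x \in A /\ x \in B) <-> x \in X.

Definition key_join (q : seq atom) : Prop :=
  forall F G, F \in q -> G \in q ->
    inter_eq (vars F) (vars G) [::] \/
    inter_eq (vars F) (vars G) (key F) \/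
    inter_eq (vars F) (vars G) (key G) \/
    (forall x, x \in key F ++ key G -> x \in vars F /\ x \in vars G).

(* Functional dependencies over variables: (lhs, rhs) means lhs -> rhs. *)
Definition fd := (seq V * seq V)%type.

Definition K (p : seq atom) : seq fd := [seq (key F, vars F) | F <- p].

(* Semantic entailment Σ |= X -> x: every relation (set of valuations of
   the variables) satisfying all dependencies of Σ satisfies X -> x. *)
Definition fd_sat (D : Type) (S : (V -> D) -> Prop) (f : fd) : Prop :=
  forall t1 t2, S t1 -> S t2 ->
    (forall y, y \in f.1 -> t1 y = t2 y) ->
    (forall y, y \in f.2 -> t1 y = t2 y).

Definition entails (Sigma : seq fd) (X : seq V) (x : V) : Prop :=
  forall (D : Type) (S : (V -> D) -> Prop),
    (forall f, f \in Sigma -> fd_sat S f) -> fd_sat S (X, [:: x]).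

Definition qc (q : seq atom) : seq atom := [seq F <- q | mode F.1].

Definition qvars (q : seq atom) : seq V := flatten (map vars q).

Definition plus_closure (q : seq atom) (F : atom) (x : V) : Prop :=
  x \in qvars q /\
  entails (K [seq G <- q | G != F] ++ K (qc q)) (key F) x.

Definition attacks (q : seq atom) (F G : atom) : Prop :=
  F != G /\
  exists (m : nat) (Fs : nat -> atom),
    [/\ Fs 0 = F, Fs m = G,
        (forall i, i <= m -> Fs i \in q) &
        (forall i, 1 <= i <= m ->
           exists x, [/\ x \in vars (Fs i.-1), x \in vars (Fs i)
                       & ~ plus_closure q F x])].

End CQ.

(* Main.v *)
Require Import Defs.
From mathcomp Require Import all_boot.
Set Implicit Arguments. Unset Strict Implicit.

Section Aux.
Variables (Rel V C : eqType) (sig : Rel -> nat * nat) (mode : Rel -> bool).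
Variable q : seq (atom Rel V C).
Variable F : atom Rel V C.

Definition valid (k : nat) (Fs : nat -> atom Rel V C) : Prop :=
  [/\ Fs 0 = F, (forall i, i <= k -> Fs i \in q) &
      (forall i, 1 <= i <= k -> forall x, x \in key sig (Fs i) -> x \in vars (Fs i.-1))].

Lemma key_vars (H : atom Rel V C) x : x \in key sig H -> x \in vars H.
Proof.
rewrite /key /vars /term_vars !mem_pmap map_take; exact: mem_take.
Qed.

Lemma valid_ext k Fs A : valid k Fs -> A \in q ->
  (forall x, x \in key sig A -> x \in vars (Fs k)) ->
  valid k.+1 (fun i => if i <= k then Fs i else A).
Proof.
move=> [h0 hq hk] hA hkA; split => //.
- move=> i Hi; case: ifP => // Hik; exact: hq.
- move=> i /andP [H1 H2] x.
  case: (leqP i k) => Hik.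
  + case: i H1 H2 Hik => // i _ _ Hik /=.
    rewrite (ltnW Hik); apply: hk; rewrite Hik; done.
  + have Ei : i = k.+1 by apply/eqP; rewrite eqn_leq H2 Hik.
    subst i; rewrite /= leqnn; exact: hkA.
Qed.

Lemma valid_pred k Fs : valid k.+1 Fs -> valid k Fs.
Proof.
move=> [h0 hq hk]; split => //.
- move=> i Hi; apply: hq; exact: leqW.
- move=> i /andP [H1 H2]; apply: hk; rewrite H1 leqW //.
Qed.

Lemma key_plus x : F \in q -> x \in key sig F -> plus_closure sig mode q F x.
Proof.
move=> Fq xk; split.
- rewrite /qvars; apply/flattenP; exists (vars F); first exact: map_f.
  exact: key_vars.
- move=> D S _ t1 t2 _ _ Hag y; rewrite /= inE => /eqP ->; exact: Hag.
Qed.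

Definition reach A := exists (l : nat) (Fs : nat -> atom Rel V C),
    [/\ Fs 0 = F, Fs l = A,
        (forall i, i <= l -> Fs i \in q) &
        (forall i, 1 <= i <= l -> forall x, x \in key sig (Fs i) -> x \in vars (Fs i.-1))].

Lemma reach_ext k Fs A : valid k Fs -> A \in q ->
  (forall x, x \in key sig A -> x \in vars (Fs k)) -> reach A.
Proof.
move=> Hv Aq Hk; have [h0 hq hk] := valid_ext Hv Aq Hk.
exists k.+1, (fun i => if i <= k then Fs i else A); split => //.
by rewrite ltnn.
Qed.

Lemma main_aux (Fs : nat -> atom Rel V C) : key_join sig q ->
  forall k, valid k Fs -> forall x A, A \in q -> x \in vars (Fs k) -> x \in vars A ->
  ~ plus_closure sig mode q F x -> reach A.
Proof.
move=> KJ; elim=> [|k IH] Hv x A Aq xH xA npc;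
  have Hv' := Hv; case: Hv => h0 hq hk.
- have H0q : Fs 0 \in q by apply: hq.
  case: (KJ _ _ H0q Aq) => [E|[E|[E|E]]].
  + by have /E := conj xH xA.
  + have /E := conj xH xA; rewrite h0 => xk.
    by case: npc; apply: key_plus => //; rewrite -h0.
  + apply: (reach_ext Hv' Aq) => y /E [] //.
  + apply: (reach_ext Hv' Aq) => y yk.
    by case: (E y); rewrite // mem_cat yk orbT.
- have Hkq : Fs k.+1 \in q by apply: hq.
  case: (KJ _ _ Hkq Aq) => [E|[E|[E|E]]].
  + by have /E := conj xH xA.
  + have /E := conj xH xA => xk.
    apply: (IH (valid_pred Hv') x A) => //.
    exact: (hk k.+1 (leqnn k.+1) x xk).
  + apply: (reach_ext Hv' Aq) => y /E [] //.
  + apply: (reach_ext Hv' Aq) => y yk.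
    by case: (E y); rewrite // mem_cat yk orbT.
Qed.
End Aux.

Theorem lemma34 (Rel V C : eqType) (sig : Rel -> nat * nat) (mode : Rel -> bool)
  (q : seq (atom Rel V C)) :
  sjf_query sig q -> key_join sig q ->
  forall F G, F \in q -> G \in q -> attacks sig mode q F G ->
  exists (l : nat) (Fs : nat -> atom Rel V C),
    [/\ Fs 0 = F, Fs l = G,
        (forall i, i <= l -> Fs i \in q) &
        (forall i, 1 <= i <= l -> forall x, x \in key sig (Fs i) -> x \in vars (Fs i.-1))].
Proof.
move=> _ KJ F G Fq Gq [_ [m [Gs [g0 gm gq gx]]]].
suff: forall i, i <= m -> reach sig q F (Gs i) by move/(_ m (leqnn m)); rewrite gm.
elim=> [|i IH] Hi.
- exists 0, (fun _ => F); split => //.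
  by move=> j /andP [] /lt0n_neq0 /negbTE; rewrite leqn0 => ->.
- have [l [Fs [f0 fl fq fk]]] := IH (ltnW Hi).
  have [x [x1 x2 npc]] := gx i.+1 Hi.
  have Hv : valid sig q F l Fs by split.
  apply: (main_aux KJ Hv (x:=x)) => //; first exact: gq.
  by rewrite fl.
  exact: npc.
Qed.
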